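(* If $G\subset \mathrm{Diff}^1_+([0,1])$ is $C^1$-close to the identity, then $G$ is without linked fixed points.
   Context: A group $G\subset \mathrm{Diff}^1_+([0,1])$ is $C^1$-close to the identity if there is a sequence $h_n\in \mathrm{Diff}^1_+([0,1])$ such that $h_n g h_n^{-1}\to \mathrm{id}$ in the $C^1$-topology as $n\to\infty$, for every $g\in G$. For a group $G$ of homeomorphisms of $[0,1]$, a pair of successive fixed points of $G$ is a pair $\{a,b\}$, $a<b$, such that $(a,b)$ is a connected component of $[0,1]\setminus \mathrm{Fix}(g)$ for some $g\in G$. Two pairs $\{a,b\}$ and $\{c,d\}$ are linked if $(a,b)\cap\{c,d\}$ or $(c,d)\cap\{a,b\}$ consists of exactly one point. $G$ is without linked fixed points if no two pairs of successive fixed points of $G$ are linked. *)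

(* Defs.v *)
From Stdlib Require Import Reals.
Open Scope R_scope.

Definition I01 (x : R) : Prop := 0 <= x <= 1.

Definition has_deriv01 (f f' : R -> R) : Prop :=
  forall x, I01 x ->
    limit1_in (fun y => (f y - f x) / (y - x))
              (fun y => I01 y /\ y <> x) (f' x) x.

Definition cont01 (f : R -> R) : Prop :=
  forall x, I01 x -> limit1_in f I01 (f x) x.

Definition C1_01 (f : R -> R) : Prop :=
  exists f', has_deriv01 f f' /\ cont01 f'.

Definition inverse01 (f finv : R -> R) : Prop :=
  (forall x, I01 x -> I01 (f x)) /\ (forall x, I01 x -> I01 (finv x)) /\
  (forall x, I01 x -> f (finv x) = x) /\ (forall x, I01 x -> finv (f x) = x).

Definition Diff1plus (f : R -> R) : Prop :=
  (exists finv, inverse01 f finv /\ C1_01 f /\ C1_01 finv) /\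
  (forall x y, I01 x -> I01 y -> x < y -> f x < f y).

(* Maps are identified when they agree on [0,1]. *)
Definition eq01 (f g : R -> R) : Prop := forall x, I01 x -> f x = g x.

Definition is_subgroup_Diff1plus (G : (R -> R) -> Prop) : Prop :=
  (forall g, G g -> Diff1plus g) /\
  (exists e, G e /\ eq01 e (fun x => x)) /\
  (forall g h, G g -> G h -> exists k, G k /\ eq01 k (fun x => g (h x))) /\
  (forall g, G g -> exists k, G k /\ eq01 (fun x => k (g x)) (fun x => x)).

Definition C1_conv_to_id (phi : nat -> R -> R) : Prop :=
  forall eps, 0 < eps -> exists N : nat, forall n, (N <= n)%nat ->
    (forall x, I01 x -> Rabs (phi n x - x) < eps) /\
    (exists d, has_deriv01 (phi n) d /\
       forall x, I01 x -> Rabs (d x - 1) < eps).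

Definition C1_close_to_id (G : (R -> R) -> Prop) : Prop :=
  exists (h hinv : nat -> R -> R),
    (forall n, Diff1plus (h n) /\ inverse01 (h n) (hinv n)) /\
    forall g, G g -> C1_conv_to_id (fun n x => h n (g (hinv n x))).

Definition fixpt (g : R -> R) (x : R) : Prop := I01 x /\ g x = x.

(* {a,b} is a pair of successive fixed points of g: a < b and (a,b) is a
   connected component of [0,1] \ Fix(g). *)
Definition successive_fixed (g : R -> R) (a b : R) : Prop :=
  a < b /\ fixpt g a /\ fixpt g b /\ (forall x, a < x < b -> g x <> x).

Definition pair_sfp (G : (R -> R) -> Prop) (a b : R) : Prop :=
  exists g, G g /\ successive_fixed g a b.

Definition in_open (a b x : R) : Prop := a < x < b.

Definition exactly_one_in (a b c d : R) : Prop :=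
  (in_open a b c /\ ~ in_open a b d) \/ (~ in_open a b c /\ in_open a b d).

Definition linked (a b c d : R) : Prop :=
  exactly_one_in a b c d \/ exactly_one_in c d a b.

Definition without_linked_fixed_points (G : (R -> R) -> Prop) : Prop :=
  forall a b c d, pair_sfp G a b -> pair_sfp G c d -> ~ linked a b c d.

(* Main.v *)
Require Import Defs.
From Stdlib Require Import Reals.
From Stdlib Require Import Lra Lia Classical.
Open Scope R_scope.

Lemma deriv_interior f d x : has_deriv01 f d -> 0 < x < 1 ->
  derivable_pt_lim f x (d x).
Proof.
  intros Hd Hx eps Heps.
  destruct (Hd x ltac:(unfold I01; lra) eps Heps) as [alp [Halp H]].
  assert (Hp : 0 < Rmin alp (Rmin x (1 - x))).
  { repeat apply Rmin_pos; lra. }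
  exists (mkposreal _ Hp). intros h Hh0 Hh. simpl in Hh.
  assert (H1 := Rmin_l alp (Rmin x (1-x))).
  assert (H2 := Rmin_r alp (Rmin x (1-x))).
  assert (H3 := Rmin_l x (1-x)). assert (H4 := Rmin_r x (1-x)).
  specialize (H (x + h)). simpl in H. unfold R_dist in H.
  replace (x + h - x) with h in H by ring.
  apply H. split.
  - split; [unfold I01; split|]. 
    + apply Rabs_def2 in Hh. lra.
    + apply Rabs_def2 in Hh. lra.
    + lra.
  - apply Rabs_def2 in Hh. apply Rabs_def1; lra.
Qed.

Lemma cont_interior f d x : has_deriv01 f d -> 0 < x < 1 -> continuity_pt f x.
Proof.
  intros Hd Hx. apply derivable_continuous_pt. exists (d x).
  apply deriv_interior; auto.
Qed.

Lemma mvt_lower f d eps u v : has_deriv01 f d ->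
  (forall x, I01 x -> Rabs (d x - 1) < eps) -> 0 < u < 1 -> 0 < v < 1 ->
  (1 - eps) * Rabs (v - u) <= Rabs (f v - f u).
Proof.
  intros Hd Hb Hu Hv.
  assert (key : forall p q, 0 < p < 1 -> 0 < q < 1 -> p < q ->
     (1 - eps) * Rabs (q - p) <= Rabs (f q - f p)).
  { intros p q Hp Hq Hpq.
    destruct (MVT_cor2 f d p q Hpq) as [c [Hc1 Hc2]].
    { intros c Hc. apply deriv_interior; auto; lra. }
    rewrite Hc1. rewrite Rabs_mult.
    assert (Hdc := Hb c ltac:(unfold I01; lra)).
    apply Rabs_def2 in Hdc.
    apply Rmult_le_compat_r; [apply Rabs_pos|].
    apply Rle_trans with (d c); [lra | apply RRle_abs]. }
  destruct (Rtotal_order u v) as [H|[H|H]].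
  - apply key; auto.
  - subst. replace (v - v) with 0 by ring. replace (f v - f v) with 0 by ring.
    rewrite Rabs_R0. lra.
  - rewrite (Rabs_minus_sym v u), (Rabs_minus_sym (f v) (f u)). apply key; auto.
Qed.
Fixpoint itr (f : R -> R) (n : nat) (x : R) : R :=
  match n with O => x | S n => f (itr f n x) end.

Definition econt (f : R -> R) (x : R) : Prop :=
  forall e, 0 < e -> exists del, 0 < del /\ forall u, Rabs (u - x) < del -> Rabs (f u - f x) < e.

Lemma cont_econt f x : continuity_pt f x -> econt f x.
Proof.
  intros H e He. destruct (H e He) as [del [Hdel Hd]].
  exists del. split; [lra|]. intros u Hu.
  destruct (Req_dec u x) as [->|Hne].
  - replace (f x - f x) with 0 by ring. rewrite Rabs_R0; lra.
  - apply Hd. split; [split; auto|]. exact I. simpl. unfold R_dist. auto.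
Qed.

Lemma itr_inv f c z : (forall x, c < x <= z -> c < f x < x) -> c < z ->
  forall j, c < itr f j z <= z.
Proof.
  intros Hf Hz j. induction j; simpl; [lra|].
  specialize (Hf _ IHj). lra.
Qed.

Lemma dynR f c z y : c < y -> (forall x, c < x <= z -> c < f x < x) ->
  (forall x, c < x <= z -> econt f x) -> exists M, itr f M z < y.
Proof.
  intros Hcy Hf Hc.
  destruct (Rlt_or_le z y) as [Hzy|Hyz]. { exists O. simpl; auto. }
  assert (Hcz : c < z) by lra.
  pose proof (itr_inv f c z Hf Hcz) as Inv.
  apply NNPP. intro Hn.
  assert (Hge : forall M, y <= itr f M z).
  { intro M. apply Rnot_lt_le. intro Hl. apply Hn. exists M; auto. }
  set (E := fun v => exists M, v = - itr f M z).
  destruct (completeness E) as [s [Hub Hl]].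
  { exists (- y). intros v [M ->]. specialize (Hge M). lra. }
  { exists (- z). exists O. reflexivity. }
  assert (Hs1 : s <= - y). { apply Hl. intros v [M ->]. specialize (Hge M). lra. }
  assert (Hs2 : - z <= s). { apply Hub. exists O. reflexivity. }
  set (l := - s).
  assert (Hlr : c < l <= z) by (unfold l; lra).
  pose proof (Hf l Hlr) as Hfl.
  destruct (Hc l Hlr (l - f l) ltac:(lra)) as [del [Hdel Hd]].
  assert (Hex : exists M, - itr f M z > s - del).
  { apply NNPP. intro Hno.
    assert (Hup : is_upper_bound E (s - del)).
    { intros v [M ->]. apply Rnot_lt_le. intro Hlt. apply Hno. exists M. lra. }
    specialize (Hl _ Hup). lra. }
  destruct Hex as [M HM].
  assert (HM2 : - itr f M z <= s) by (apply Hub; exists M; reflexivity).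
  assert (Hu : Rabs (itr f M z - l) < del).
  { apply Rabs_def1; unfold l; lra. }
  specialize (Hd _ Hu). apply Rabs_def2 in Hd.
  assert (HS : - itr f (S M) z <= s) by (apply Hub; exists (S M); reflexivity).
  simpl in HS. unfold l in *. lra.
Qed.

Lemma itr_neg f n x : itr (fun u => - f (- u)) n x = - itr f n (- x).
Proof.
  induction n; simpl. ring. rewrite IHn. rewrite Ropp_involutive. reflexivity.
Qed.

Lemma dynL f c z y : y < c -> (forall x, z <= x < c -> x < f x < c) ->
  (forall x, z <= x < c -> econt f x) -> exists M, y < itr f M z.
Proof.
  intros Hcy Hf Hc.
  destruct (dynR (fun u => - f (- u)) (- c) (- z) (- y)) as [M HM].
  - lra.
  - intros x Hx. specialize (Hf (- x) ltac:(lra)). lra.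
  - intros x Hx e He. destruct (Hc (- x) ltac:(lra) e He) as [del [Hdel Hd]].
    exists del. split; auto. intros u Hu.
    specialize (Hd (- u)). cbv beta.
    replace (- f (- u) - - f (- x)) with (- (f (- u) - f (- x))) by ring.
    rewrite Rabs_Ropp. apply Hd.
    replace (- u - - x) with (- (u - x)) by ring. rewrite Rabs_Ropp. auto.
  - exists M. rewrite itr_neg in HM. rewrite Ropp_involutive in HM. lra.
Qed.
Lemma sign_const g a b : (forall x, a < x < b -> continuity_pt g x) ->
  (forall x, a < x < b -> g x <> x) ->
  (forall x, a < x < b -> x < g x) \/ (forall x, a < x < b -> g x < x).
Proof.
  intros Hc Hn.
  destruct (classic (forall x, a < x < b -> x < g x)) as [H|H]; [left; auto|right].
  apply not_all_ex_not in H. destruct H as [x1 H1].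
  apply imply_to_and in H1. destruct H1 as [Hx1 H1].
  assert (Hg1 : g x1 < x1). { specialize (Hn x1 Hx1). lra. }
  intros x2 Hx2. apply Rnot_le_lt. intro Hle.
  assert (Hg2 : x2 < g x2). { specialize (Hn x2 Hx2). lra. }
  assert (Hct : forall t, a < t < b -> continuity_pt (fun t => g t - t) t).
  { intros t Ht. apply continuity_pt_minus; [apply Hc; auto| apply (derivable_continuous_pt id); exists 1; apply derivable_pt_lim_id]. }
  destruct (Rtotal_order x1 x2) as [Hl|[He|Hl]].
  - destruct (Ranalysis5.IVT_interv (fun t => g t - t) x1 x2) as [z [Hz Hz0]].
    + intros t Ht. apply Hct. lra.
    + auto.
    + lra.
    + lra.
    + apply (Hn z); [lra|]. lra.
  - subst. lra.
  - destruct (Ranalysis5.IVT_interv (fun t => - (g t - t)) x2 x1) as [z [Hz Hz0]].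
    + intros t Ht. apply continuity_pt_opp. apply Hct. lra.
    + auto.
    + lra.
    + lra.
    + apply (Hn z); [lra|]. lra.
Qed.

Lemma bernoulli e n : 0 <= e <= 1 -> 1 - INR n * e <= (1 - e) ^ n.
Proof.
  intros He. induction n.
  - simpl. lra.
  - rewrite S_INR. simpl.
    assert (0 <= INR n) by apply pos_INR.
    assert (0 <= (1-e)^n) by (apply pow_le; lra).
    nra.
Qed.

Lemma arith M : let e := / (2 * INR M + 2) in
  0 < e /\ 1 <= (1 - e) ^ M * (2 - e).
Proof.
  intro e. assert (HM := pos_INR M).
  assert (Hp : 0 < 2 * INR M + 2) by lra.
  assert (He : 0 < e) by (apply Rinv_0_lt_compat; auto).
  assert (Hee : e * (2 * INR M + 2) = 1) by (unfold e; field; lra).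
  split; auto.
  assert (He1 : e <= 1) by nra.
  pose proof (bernoulli e M ltac:(lra)).
  assert (0 <= 1 - INR M * e) by nra.
  apply Rle_trans with ((1 - INR M * e) * (2 - e)); [nra|].
  apply Rmult_le_compat_r; lra.
Qed.

Lemma core (h hinv f g dF dG : R -> R) c M eps :
  (forall x, I01 x -> I01 (h x)) ->
  (forall x y, I01 x -> I01 y -> x < y -> h x < h y) ->
  (forall x, I01 x -> hinv (h x) = x) ->
  has_deriv01 (fun x => h (f (hinv x))) dF ->
  (forall x, I01 x -> Rabs (dF x - 1) < eps) ->
  has_deriv01 (fun x => h (g (hinv x))) dG ->
  (forall x, I01 x -> Rabs (dG x - 1) < eps) ->
  0 < eps -> eps < 1 -> 1 <= (1 - eps) ^ M * (2 - eps) ->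
  f c = c -> 0 < c < 1 -> 0 < g c < 1 -> 0 < g (g c) < 1 ->
  (forall j, 0 < itr f j (g (g c)) < 1) ->
  ((c < g c < g (g c) /\ c < itr f M (g (g c)) < g c) \/
   (g (g c) < g c < c /\ g c < itr f M (g (g c)) < c)) -> False.
Proof.
  intros hI hmon hK HdF HbF HdG HbG Heps Heps1 Har Hfc Hc Hgc Hggc Hw Hcase.
  assert (hint : forall x, 0 < x < 1 -> 0 < h x < 1).
  { intros x Hx. assert (H0 := hI 0 ltac:(unfold I01; lra)).
    assert (H1 := hI 1 ltac:(unfold I01; lra)).
    assert (h 0 < h x) by (apply hmon; unfold I01; lra).
    assert (h x < h 1) by (apply hmon; unfold I01; lra).
    unfold I01 in *; lra. }
  assert (hlt : forall x y, 0 < x < 1 -> 0 < y < 1 -> x < y -> h x < h y).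
  { intros x y Hx Hy Hxy. apply hmon; unfold I01; lra. }
  set (m := 1 - eps).
  set (C := h c). set (Y := h (g c)). set (Z := h (g (g c))).
  set (W := fun j => h (itr f j (g (g c)))).
  assert (HZY : m * Rabs (Y - C) <= Rabs (Z - Y)).
  { pose proof (mvt_lower _ _ eps C Y HdG HbG (hint c Hc) (hint _ Hgc)) as H.
    unfold C, Y, Z in *. rewrite !hK in H by (unfold I01; lra). exact H. }
  assert (HW : forall j, m * Rabs (W j - C) <= Rabs (W (S j) - C)).
  { intro j. pose proof (mvt_lower _ _ eps C (W j) HdF HbF (hint c Hc) (hint _ (Hw j))) as H.
    unfold C, W in *. rewrite !hK in H by (unfold I01; try specialize (Hw j); lra).
    rewrite Hfc in H. simpl. exact H. }
  assert (Hm : 0 < m) by (unfold m; lra).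
  assert (Hind : forall j, m ^ j * Rabs (Z - C) <= Rabs (W j - C)).
  { induction j.
    - simpl. unfold W, Z. simpl. lra.
    - simpl. specialize (HW j).
      apply Rle_trans with (m * Rabs (W j - C)); [|auto].
      rewrite Rmult_assoc. apply Rmult_le_compat_l; lra. }
  specialize (Hind M). unfold m in *.
  assert (HmM : 0 <= (1 - eps) ^ M) by (apply pow_le; lra).
  destruct Hcase as [[H1 H2]|[H1 H2]].
  - assert (C < Y) by (apply hlt; lra). assert (Y < Z) by (apply hlt; lra).
    assert (C < W M) by (apply hlt; auto; lra).
    assert (W M < Y) by (apply hlt; auto; lra).
    rewrite !Rabs_right in HZY, Hind by lra.
    assert (Z - C >= (2 - eps) * (Y - C)) by nra.
    assert ((1 - eps) ^ M * (Z - C) >= (1 - eps) ^ M * (2 - eps) * (Y - C)) by nra.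
    nra.
  - assert (Y < C) by (apply hlt; lra). assert (Z < Y) by (apply hlt; lra).
    assert (W M < C) by (apply hlt; auto; lra).
    assert (Y < W M) by (apply hlt; auto; lra).
    rewrite !Rabs_left in HZY, Hind by lra.
    assert (- (Z - C) >= (2 - eps) * (- (Y - C))) by nra.
    assert ((1 - eps) ^ M * (-(Z - C)) >= (1 - eps) ^ M * (2 - eps) * (-(Y - C))) by nra.
    nra.
Qed.

Lemma diff_facts g : Diff1plus g ->
  (forall x, I01 x -> I01 (g x)) /\
  (forall x, I01 x -> exists u, I01 u /\ g u = x) /\
  (forall x, 0 < x < 1 -> econt g x) /\
  (forall x y, I01 x -> I01 y -> x < y -> g x < g y).
Proof.
  intros [[finv [[H1 [H2 [H3 H4]]] [[d [Hd _]] _]]] Hm].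
  split; [auto|split; [|split; [|auto]]].
  - intros x Hx. exists (finv x). auto.
  - intros x Hx. apply cont_econt. eapply cont_interior; eauto.
Qed.

Lemma fix_bounds g a b : successive_fixed g a b -> 0 <= a /\ b <= 1.
Proof. intros [Hab [[Ha _] [[Hb _] _]]]. unfold I01 in *. lra. Qed.

Lemma inv_flip g k a b : Diff1plus g -> successive_fixed g a b ->
  (forall x, I01 x -> k (g x) = x) ->
  ((forall x, a < x < b -> x < g x) -> (forall x, a < x < b -> k x < x)) /\
  ((forall x, a < x < b -> g x < x) -> (forall x, a < x < b -> x < k x)).
Proof.
  intros Hg Hs Hk. destruct (diff_facts g Hg) as [gI [gS [gC gM]]].
  pose proof (fix_bounds g a b Hs) as [Ha0 Hb1].
  destruct Hs as [Hab [[Ia Ga] [[Ib Gb] Hn]]].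
  assert (pre : forall x, a < x < b -> exists u, a < u < b /\ g u = x /\ k x = u).
  { intros x Hx. destruct (gS x ltac:(unfold I01; lra)) as [u [Iu Gu]].
    exists u. split; [|split; auto; rewrite <- Gu; apply Hk; auto].
    split.
    - apply Rnot_le_lt. intro Hle. destruct (Rle_lt_or_eq_dec u a Hle) as [Hl|He].
      + assert (g u < g a) by (apply gM; auto). lra.
      + subst. lra.
    - apply Rnot_le_lt. intro Hle. destruct (Rle_lt_or_eq_dec b u Hle) as [Hl|He].
      + assert (g b < g u) by (apply gM; auto). lra.
      + subst. lra. }
  split; intros Hsg x Hx; destruct (pre x Hx) as [u [Hu [Gu Ku]]];
    specialize (Hsg u Hu); lra.
Qed.

Definition up (g : R -> R) a b := forall x, a < x < b -> x < g x.
Definition down (g : R -> R) a b := forall x, a < x < b -> g x < x.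

Lemma choose_sign G g a b : is_subgroup_Diff1plus G -> G g -> successive_fixed g a b ->
  (exists k, G k /\ successive_fixed k a b /\ up k a b) /\
  (exists k, G k /\ successive_fixed k a b /\ down k a b).
Proof.
  intros [HD [_ [_ Hinv]]] Gg Hs.
  pose proof (HD g Gg) as Dg. destruct (diff_facts g Dg) as [gI [gS [gC gM]]].
  pose proof (fix_bounds g a b Hs) as [Ha0 Hb1].
  destruct (Hinv g Gg) as [k [Gk Hk]].
  destruct (inv_flip g k a b Dg Hs Hk) as [F1 F2].
  assert (Hsk : forall (P : Prop), (up k a b \/ down k a b) -> successive_fixed k a b).
  { intros _ Hud. destruct Hs as [Hab [[Ia Ga] [[Ib Gb] Hn]]].
    split; auto. split; [split; auto; rewrite <- Ga at 1; rewrite Hk; auto|].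
    split; [split; auto; rewrite <- Gb at 1; rewrite Hk; auto|].
    intros x Hx He. destruct Hud as [Hu|Hu]; specialize (Hu x Hx); lra. }
  assert (Hc : forall x, a < x < b -> continuity_pt g x).
  { intros x Hx. destruct Dg as [[finv [_ [[d [Hd _]] _]]] _].
    eapply cont_interior; eauto. lra. }
  destruct Hs as [Hab [Fa [Fb Hn]]] eqn:Es.
  destruct (sign_const g a b Hc Hn) as [Hu|Hd].
  - split; [exists g; auto|].
    exists k. split; auto. split; [apply (Hsk True); right; exact (F1 Hu)|]. exact (F1 Hu).
  - split; [|exists g; auto].
    exists k. split; auto. split; [apply (Hsk True); left; exact (F2 Hd)|]. exact (F2 Hd).
Qed.

Lemma no_config G f g c M : C1_close_to_id G -> G f -> G g ->
  f c = c -> 0 < c < 1 -> 0 < g c < 1 -> 0 < g (g c) < 1 ->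
  (forall j, 0 < itr f j (g (g c)) < 1) ->
  ((c < g c < g (g c) /\ c < itr f M (g (g c)) < g c) \/
   (g (g c) < g c < c /\ g c < itr f M (g (g c)) < c)) -> False.
Proof.
  intros [h [hinv [Hh Hconv]]] Gf Gg Hfc Hc Hgc Hggc Hw Hcase.
  destruct (arith M) as [He Har]. set (eps := / (2 * INR M + 2)) in *.
  assert (He1 : eps < 1).
  { unfold eps. assert (HM := pos_INR M). apply Rle_lt_trans with (/ 2).
    - apply Rinv_le_contravar; lra.
    - lra. }
  destruct (Hconv f Gf eps He) as [N1 HN1].
  destruct (Hconv g Gg eps He) as [N2 HN2].
  destruct (HN1 (Nat.max N1 N2) ltac:(lia)) as [_ [dF [HdF HbF]]].
  destruct (HN2 (Nat.max N1 N2) ltac:(lia)) as [_ [dG [HdG HbG]]].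
  destruct (Hh (Nat.max N1 N2)) as [[_ Hmon] [HI [_ [_ HK]]]].
  exact (core (h (Nat.max N1 N2)) (hinv (Nat.max N1 N2)) f g dF dG c M eps
    HI Hmon HK HdF HbF HdG HbG He He1 Har Hfc Hc Hgc Hggc Hw Hcase).
Qed.

Lemma itr_invL f c z : (forall x, z <= x < c -> x < f x < c) -> z < c ->
  forall j, z <= itr f j z < c.
Proof.
  intros Hf Hz j. induction j; simpl; [lra|].
  specialize (Hf _ IHj). lra.
Qed.

Lemma case1 G f g a b c d : is_subgroup_Diff1plus G -> C1_close_to_id G ->
  G f -> G g -> successive_fixed g a b -> successive_fixed f c d ->
  up g a b -> down f c d -> a < c < b -> b <= d -> False.
Proof.
  intros HG Hcl Gf Gg Sg Sf Ug Df Hc Hbd.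
  destruct HG as [HD _].
  destruct (diff_facts g (HD g Gg)) as [gI [_ [_ gM]]].
  destruct (diff_facts f (HD f Gf)) as [fI [_ [fC fM]]].
  pose proof (fix_bounds g a b Sg) as [Ha0 Hb1].
  destruct Sg as [Hab [[Ia Ga] [[Ib Gb] _]]].
  destruct Sf as [Hcd [[Ic Fc] [[Id Fd] _]]].
  assert (Hgc1 : c < g c) by (apply Ug; lra).
  assert (Hgc2 : g c < b) by (rewrite <- Gb; apply gM; unfold I01 in *; lra).
  assert (Hggc1 : g c < g (g c)) by (apply Ug; lra).
  assert (Hggc2 : g (g c) < b) by (rewrite <- Gb; apply gM; unfold I01 in *; lra).
  assert (Hf : forall x, c < x <= g (g c) -> c < f x < x).
  { intros x Hx. split.
    - rewrite <- Fc at 1. apply fM; unfold I01 in *; lra.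
    - apply Df. lra. }
  destruct (dynR f c (g (g c)) (g c) Hgc1 Hf) as [M HM].
  { intros x Hx. apply fC. unfold I01 in *; lra. }
  pose proof (itr_inv f c (g (g c)) Hf ltac:(lra)) as Inv.
  apply (no_config G f g c M Hcl Gf Gg Fc).
  - unfold I01 in *; lra.
  - lra.
  - lra.
  - intro j. specialize (Inv j). unfold I01 in *; lra.
  - left. specialize (Inv M). lra.
Qed.

Lemma case2 G f g a b c d : is_subgroup_Diff1plus G -> C1_close_to_id G ->
  G f -> G g -> successive_fixed g a b -> successive_fixed f c d ->
  down g a b -> up f c d -> c <= a -> a < d < b -> False.
Proof.
  intros HG Hcl Gf Gg Sg Sf Ug Df Hca Hd.
  destruct HG as [HD _].
  destruct (diff_facts g (HD g Gg)) as [gI [_ [_ gM]]].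
  destruct (diff_facts f (HD f Gf)) as [fI [_ [fC fM]]].
  pose proof (fix_bounds g a b Sg) as [Ha0 Hb1].
  destruct Sg as [Hab [[Ia Ga] [[Ib Gb] _]]].
  destruct Sf as [Hcd [[Ic Fc] [[Id Fd] _]]].
  assert (Hgc1 : g d < d) by (apply Ug; lra).
  assert (Hgc2 : a < g d) by (rewrite <- Ga at 1; apply gM; unfold I01 in *; lra).
  assert (Hggc1 : g (g d) < g d) by (apply Ug; lra).
  assert (Hggc2 : a < g (g d)) by (rewrite <- Ga at 1; apply gM; unfold I01 in *; lra).
  assert (Hf : forall x, g (g d) <= x < d -> x < f x < d).
  { intros x Hx. split.
    - apply Df. lra.
    - rewrite <- Fd. apply fM; unfold I01 in *; lra. }
  destruct (dynL f d (g (g d)) (g d) Hgc1 Hf) as [M HM].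
  { intros x Hx. apply fC. unfold I01 in *; lra. }
  pose proof (itr_invL f d (g (g d)) Hf ltac:(lra)) as Inv.
  apply (no_config G f g d M Hcl Gf Gg Fd).
  - unfold I01 in *; lra.
  - lra.
  - lra.
  - intro j. specialize (Inv j). unfold I01 in *; lra.
  - right. specialize (Inv M). lra.
Qed.

Lemma one_side G a b c d : is_subgroup_Diff1plus G -> C1_close_to_id G ->
  pair_sfp G a b -> pair_sfp G c d -> exactly_one_in a b c d -> False.
Proof.
  intros HG Hcl [g [Gg Sg]] [f [Gf Sf]] Hex.
  destruct (choose_sign G g a b HG Gg Sg) as [[gu [Ggu [Sgu Ugu]]] [gd [Ggd [Sgd Dgd]]]].
  destruct (choose_sign G f c d HG Gf Sf) as [[fu [Gfu [Sfu Ufu]]] [fd [Gfd [Sfd Dfd]]]].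
  destruct Sf as [Hcd _]. destruct Sg as [Hab _].
  unfold in_open in Hex.
  destruct Hex as [[H1 H2]|[H1 H2]]; unfold in_open in H1, H2.
  - apply (case1 G fd gu a b c d HG Hcl Gfd Ggu Sgu Sfd Ugu Dfd); [exact H1|].
    apply Rnot_lt_le. intro. apply H2. split; lra.
  - apply (case2 G fu gd a b c d HG Hcl Gfu Ggd Sgd Sfu Dgd Ufu); [|split; lra].
    apply Rnot_lt_le. intro. apply H1. split; lra.
Qed.

Theorem theoremt (G : (R -> R) -> Prop) :
  is_subgroup_Diff1plus G -> C1_close_to_id G -> without_linked_fixed_points G.
Proof.
  intros HG Hcl a b c d Hab Hcd [H|H].
  - exact (one_side G a b c d HG Hcl Hab Hcd H).
  - exact (one_side G c d a b HG Hcl Hcd Hab H).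
Qed.
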